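(* Let $\omega$ be a valid weight, let $a\in\mathbb{C}\setminus\{0\}$, and for $b\in\mathbb{C}$ let $V_b=M_{b-z}^*M_{b-z}$ act on $H^2_\omega$. Then for each $\theta\in\mathbb{R}$, $V_a$ is unitarily equivalent to $V_{ae^{i\theta}}$. In particular, $\sigma(V_a)=\sigma(V_{ae^{i\theta}})$ and $\sigma_{\mathrm p}(V_a)=\sigma_{\mathrm p}(V_{ae^{i\theta}})$ for all $\theta\in\mathbb{R}$.
   Context: A weight $\omega=\{\omega_n\}_{n\ge0}$ is called valid if it is a monotonic sequence of positive numbers with $\omega_0=1$, $\lim_{n\to\infty}\omega_{n+1}/\omega_n=1$ and $\sum_{n=0}^\infty(1-\omega_{n+1}/\omega_n)^2<\infty$. The weighted Hardy space $H^2_\omega$ is the Hilbert space of holomorphic functions $f(z)=\sum_{n\ge0}a_nz^n$ on the unit disc with $\|f\|_\omega^2=\sum_{n\ge0}|a_n|^2\omega_n<\infty$. $M_\varphi$ denotes multiplication by the polynomial $\varphi$ on $H^2_\omega$ and $M_\varphi^*$ its adjoint. $\sigma$ and $\sigma_{\mathrm p}$ denote the spectrum and point spectrum. *)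

(* Defs.v *)
From Stdlib Require Import Reals Lra ClassicalEpsilon.
From Coquelicot Require Import Coquelicot.
Open Scope R_scope.

Definition valid_weight (w : nat -> R) : Prop :=
  (forall n, 0 < w n) /\ w 0%nat = 1 /\
  ((forall n, w n <= w (S n)) \/ (forall n, w (S n) <= w n)) /\
  is_lim_seq (fun n => w (S n) / w n) 1 /\
  ex_series (fun n => (1 - w (S n) / w n) ^ 2).

(* Elements of H^2_omega are identified with their Taylor coefficient
   sequences f(z) = sum_n a n z^n. *)
Definition in_H2 (w : nat -> R) (a : nat -> C) : Prop :=
  ex_series (fun n => (Cmod (a n)) ^ 2 * w n).

Definition ip (w : nat -> R) (f g : nat -> C) : C :=
  (Series (fun n => Re (Cmult (f n) (Cconj (g n))) * w n),
   Series (fun n => Im (Cmult (f n) (Cconj (g n))) * w n)).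

Definition Mbz (b : C) (f : nat -> C) : nat -> C :=
  fun n => Cminus (Cmult b (f n)) (match n with O => RtoC 0 | S m => f m end).

(* Hilbert-space adjoint of T on H^2_omega: (adjoint w T) g is the unique
   h in H^2_omega with <T f, g> = <f, h> for all f in H^2_omega
   (chosen by epsilon; default 0 if no such h exists). *)
Definition adjoint (w : nat -> R) (T : (nat -> C) -> (nat -> C))
  (g : nat -> C) : nat -> C :=
  epsilon (inhabits (fun _ => RtoC 0))
    (fun h => in_H2 w h /\ forall f, in_H2 w f -> ip w (T f) g = ip w f h).

Definition Vop (w : nat -> R) (b : C) (f : nat -> C) : nat -> C :=
  adjoint w (Mbz b) (Mbz b f).

Definition unitary (w : nat -> R) (U : (nat -> C) -> (nat -> C)) : Prop :=
  (forall f, in_H2 w f -> in_H2 w (U f)) /\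
  (forall f g (c : C), in_H2 w f -> in_H2 w g ->
     U (fun n => Cplus (Cmult c (f n)) (g n)) =
     (fun n => Cplus (Cmult c (U f n)) (U g n))) /\
  (forall f g, in_H2 w f -> in_H2 w g -> ip w (U f) (U g) = ip w f g) /\
  (forall g, in_H2 w g -> exists f, in_H2 w f /\ U f = g).

Definition unitarily_equivalent (w : nat -> R)
  (A B : (nat -> C) -> (nat -> C)) : Prop :=
  exists U, unitary w U /\ forall f, in_H2 w f -> U (A f) = B (U f).

(* Spectrum of an operator T on H^2_omega: lambda such that T - lambda I
   is not a bijection of H^2_omega onto itself (by the open mapping theorem
   this is the usual spectrum for bounded T). *)
Definition spectrum (w : nat -> R) (T : (nat -> C) -> (nat -> C)) (l : C) : Prop :=
  ~ (forall g, in_H2 w g ->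
       exists! f, in_H2 w f /\ (fun n => Cminus (T f n) (Cmult l (f n))) = g).

Definition point_spectrum (w : nat -> R) (T : (nat -> C) -> (nat -> C)) (l : C) : Prop :=
  exists f, in_H2 w f /\ f <> (fun _ => RtoC 0) /\
            T f = (fun n => Cmult l (f n)).

Definition cexpi (t : R) : C := (cos t, sin t).

(* Main.v *)
Require Import Defs.
From Stdlib Require Import Reals Lra Lia FunctionalExtensionality ClassicalEpsilon.
From Coquelicot Require Import Coquelicot.
Open Scope R_scope.

Ltac Ceq := apply injective_projections; simpl; ring.

Lemma ratio_bound (w : nat -> R) : valid_weight w -> exists K, 0 < K /\ forall n, w (S n) <= K * w n.
Proof.
  intros [Hp [_ [_ [Hl _]]]].
  apply is_lim_seq_spec in Hl. destruct (Hl (mkposreal 1 Rlt_0_1)) as [N HN].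
  assert (gen : forall N M, (forall n, (N <= n)%nat -> w (S n) / w n <= M) ->
     exists K, forall n, w (S n) / w n <= K).
  { induction N0 as [|N0 IH]; intros M H.
    - exists M; intros; apply H; lia.
    - apply (IH (Rmax M (w (S N0) / w N0))). intros n Hn.
      destruct (Nat.eq_dec n N0) as [->|]. apply Rmax_r.
      eapply Rle_trans; [apply H; lia| apply Rmax_l]. }
  destruct (gen N 2) as [K HK].
  { intros n Hn. specialize (HN n Hn). simpl in HN. apply Rabs_lt_between in HN. lra. }
  exists (Rmax K 1). split. eapply Rlt_le_trans; [apply Rlt_0_1|apply Rmax_r].
  intro n. specialize (HK n). specialize (Hp n) as Hn.
  assert (w (S n) / w n <= Rmax K 1) by (eapply Rle_trans; [apply HK|apply Rmax_l]).
  apply Rmult_le_compat_r with (r := w n) in H; [|lra].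
  field_simplify in H; lra.
Qed.

Lemma bump_series (k : nat) (c : R) : is_series (fun n => if Nat.eq_dec n k then c else 0) c.
Proof.
  assert (Hs : forall N, (k <= N)%nat -> sum_n (fun n => if Nat.eq_dec n k then c else 0) N = c).
  { assert (H0 : forall N, (N < k)%nat -> sum_n (fun n => if Nat.eq_dec n k then c else 0) N = 0).
    { induction N; intros. rewrite sum_O. destruct Nat.eq_dec; [lia|auto].
      rewrite sum_Sn, IHN by lia. destruct Nat.eq_dec; [lia|]. apply Rplus_0_r. }
    induction N; intros.
    - rewrite sum_O. destruct Nat.eq_dec; [auto|lia].
    - destruct (Nat.eq_dec (S N) k) as [E|E].
      + rewrite sum_Sn, H0 by lia. destruct Nat.eq_dec; [|lia]. apply Rplus_0_l.
      + rewrite sum_Sn, IHN by lia. destruct Nat.eq_dec; [lia|]. apply Rplus_0_r. }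
  change (is_lim_seq (sum_n (fun n => if Nat.eq_dec n k then c else 0)) c).
  apply is_lim_seq_ext_loc with (u := fun _ => c).
  exists k. intros. symmetry. apply Hs. lia.
  apply is_lim_seq_const.
Qed.


Lemma cexpi_add x y : Cmult (cexpi x) (cexpi y) = cexpi (x + y).
Proof. unfold cexpi. rewrite cos_plus, sin_plus. apply injective_projections; simpl; ring. Qed.

Lemma Cmod_cexpi x : Cmod (cexpi x) = 1.
Proof. unfold Cmod, cexpi; simpl.
  replace (cos x * (cos x * 1) + sin x * (sin x * 1)) with 1. apply sqrt_1.
  pose proof (sin2_cos2 x) as H. unfold Rsqr in H. nra. Qed.

Lemma unimod z x y : Cmod z = 1 -> Cmult (Cmult z x) (Cconj (Cmult z y)) = Cmult x (Cconj y).
Proof.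
  intro H. destruct z as [z1 z2], x as [x1 x2], y as [y1 y2].
  unfold Cmod in H; simpl in H.
  assert (E : z1 * (z1 * 1) + z2 * (z2 * 1) = 1).
  { rewrite <- (sqrt_sqrt (z1 * (z1 * 1) + z2 * (z2 * 1))) by nra. rewrite H; ring. }
  apply injective_projections; simpl; apply Rminus_diag_uniq.
  - transitivity ((z1 * (z1 * 1) + z2 * (z2 * 1) - 1) * (x1*y1 + x2*y2)); [ring| rewrite E; ring].
  - transitivity ((z1 * (z1 * 1) + z2 * (z2 * 1) - 1) * (x2*y1 - x1*y2)); [ring| rewrite E; ring].
Qed.

Definition mulC (m : nat -> C) (f : nat -> C) : nat -> C := fun n => Cmult (m n) (f n).

Lemma mul_H2 w m f : (forall n, Cmod (m n) = 1) -> in_H2 w f -> in_H2 w (mulC m f).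
Proof. intros Hm H. unfold in_H2, mulC in *. eapply ex_series_ext; [|exact H].
  intro n. simpl. rewrite Cmod_mult, Hm. ring. Qed.

Lemma mul_ip w m f g : (forall n, Cmod (m n) = 1) -> ip w (mulC m f) (mulC m g) = ip w f g.
Proof. intros Hm. unfold ip, mulC. f_equal; apply Series_ext; intro n; rewrite unimod; auto. Qed.

Lemma mul_inv m m' f : (forall n, Cmult (m n) (m' n) = RtoC 1) -> mulC m (mulC m' f) = f.
Proof. intro H. unfold mulC. apply functional_extensionality. intro n.
  rewrite Cmult_assoc, H. apply Cmult_1_l. Qed.

Lemma ex_series_lin (a b : nat -> R) c1 c2 : ex_series a -> ex_series b -> ex_series (fun n => c1 * a n + c2 * b n).
Proof. intros. apply (ex_series_plus (fun n => scal c1 (a n)) (fun n => scal c2 (b n))); apply (@ex_series_scal R_AbsRing R_NormedModule); auto. Qed.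

Lemma ex_series_abs (a b : nat -> R) : (forall n, Rabs (a n) <= b n) -> ex_series b -> ex_series a.
Proof. intros. apply (ex_series_le a b); auto. Qed.

Lemma amgm x y w : 0 <= w -> x * y * w <= (x^2 * w + y^2 * w) / 2.
Proof. intros. assert (0 <= (x - y)^2 * w) by (apply Rmult_le_pos; [apply pow2_ge_0|auto]). nra. Qed.

Lemma Cmod_sq_sub x y : Cmod (Cminus x y) ^ 2 <= 2 * Cmod x ^ 2 + 2 * Cmod y ^ 2.
Proof. unfold Cminus. pose proof (Cmod_triangle x (Copp y)). rewrite Cmod_opp in H.
  pose proof (Cmod_ge_0 x). pose proof (Cmod_ge_0 y). pose proof (Cmod_ge_0 (Cplus x (Copp y))).
  assert (Cmod (Cplus x (Copp y))^2 <= (Cmod x + Cmod y)^2) by (apply pow_incr; lra).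
  pose proof (pow2_ge_0 (Cmod x - Cmod y)). nra. Qed.

Definition sh (f : nat -> C) n : C := match n with O => RtoC 0 | S m => f m end.

Lemma Mbz_sh b f n : Mbz b f n = Cminus (Cmult b (f n)) (sh f n).
Proof. destruct n; reflexivity. Qed.

Lemma ex_series_scalR (a : nat -> R) c : ex_series a -> ex_series (fun n => c * a n).
Proof. intros. apply (@ex_series_scal R_AbsRing R_NormedModule); auto. Qed.

Lemma Mbz_H2 w K b f : 0 < K -> (forall n, 0 < w n) -> (forall n, w (S n) <= K * w n) ->
  in_H2 w f -> in_H2 w (Mbz b f).
Proof.
  unfold in_H2. intros HK Hw HwK Hf.
  assert (Hs : ex_series (fun n => Cmod (sh f n)^2 * w n)).
  { apply ex_series_incr_1. cbn [sh].
    apply ex_series_abs with (b := fun n => K * (Cmod (f n)^2 * w n)).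
    - intro n. rewrite Rabs_pos_eq. pose proof (pow2_ge_0 (Cmod (f n))). specialize (HwK n). nra.
      apply Rmult_le_pos. apply pow2_ge_0. left; auto.
    - apply ex_series_scalR; auto. }
  apply ex_series_abs with (b := fun n => (2*Cmod b^2) * (Cmod (f n)^2 * w n) + 2 * (Cmod (sh f n)^2 * w n)).
  - intro n. rewrite Rabs_pos_eq. rewrite Mbz_sh. pose proof (Cmod_sq_sub (Cmult b (f n)) (sh f n)).
    rewrite Cmod_mult in H. specialize (Hw n). rewrite Rpow_mult_distr in H. nra.
    apply Rmult_le_pos. apply pow2_ge_0. left; auto.
  - apply ex_series_lin; auto.
Qed.

Definition hadj (w : nat -> R) (b : C) (g : nat -> C) (m : nat) : C :=
  Cminus (Cmult (Cconj b) (g m)) (Cmult (g (S m)) (RtoC (w (S m) / w m))).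

Lemma ip_comp w K (p : C -> R) b g f' : 0 < K -> (forall n, 0 < w n) -> (forall n, w (S n) <= K * w n) ->
  (forall x y, p (Cminus x y) = p x - p y) -> (forall x, Rabs (p x) <= Cmod x) ->
  (forall x r, p (Cmult x (RtoC r)) = p x * r) ->
  in_H2 w g -> in_H2 w f' ->
  Series (fun n => p (Cmult (Mbz b f' n) (Cconj (g n))) * w n) =
  Series (fun n => p (Cmult (f' n) (Cconj (hadj w b g n))) * w n).
Proof.
  intros HK Hw HwK Hlin Hb Hsc Hg Hf. unfold in_H2 in *.
  set (A := fun n => p (Cmult (Cmult b (f' n)) (Cconj (g n))) * w n).
  set (D := fun m => p (Cmult (f' m) (Cconj (g (S m)))) * w (S m)).
  set (Cc := fun n => p (Cmult (sh f' n) (Cconj (g n))) * w n).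
  assert (exA : ex_series A).
  { apply ex_series_abs with (b := fun n => (Cmod b/2) * (Cmod (f' n)^2 * w n) + (Cmod b/2) * (Cmod (g n)^2 * w n)).
    2: apply ex_series_lin; auto.
    intro n. unfold A. specialize (Hw n). rewrite Rabs_mult, (Rabs_pos_eq (w n)) by lra.
    eapply Rle_trans. apply Rmult_le_compat_r. lra. apply Hb.
    rewrite !Cmod_mult, Cmod_conj. pose proof (amgm (Cmod (f' n)) (Cmod (g n)) (w n)).
    pose proof (Cmod_ge_0 b). nra. }
  assert (exgS : ex_series (fun m => Cmod (g (S m))^2 * w (S m))).
  { apply (ex_series_incr_1 (fun m => Cmod (g m)^2 * w m)); auto. }
  assert (exD : ex_series D).
  { apply ex_series_abs with (b := fun m => (K/2) * (Cmod (f' m)^2 * w m) + (1/2) * (Cmod (g (S m))^2 * w (S m))).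
    2: apply ex_series_lin; auto.
    intro n. unfold D. pose proof (Hw (S n)). rewrite Rabs_mult, (Rabs_pos_eq (w (S n))) by lra.
    eapply Rle_trans. apply Rmult_le_compat_r. lra. apply Hb.
    rewrite !Cmod_mult, Cmod_conj. pose proof (amgm (Cmod (f' n)) (Cmod (g (S n))) (w (S n))).
    pose proof (HwK n). pose proof (pow2_ge_0 (Cmod (f' n))). nra. }
  assert (exC : ex_series Cc).
  { apply ex_series_incr_1. exact exD. }
  assert (C0 : Cc 0%nat = 0).
  { unfold Cc. simpl. pose proof (Hb (Cmult (RtoC 0) (Cconj (g 0%nat)))).
    rewrite Cmult_0_l, Cmod_0 in H. rewrite Cmult_0_l. pose proof (Rabs_pos (p (RtoC 0))).
    assert (Rabs (p (RtoC 0)) = 0) by lra. apply Rabs_eq_0 in H1. rewrite H1; ring. }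
  rewrite (Series_ext _ (fun n => A n - Cc n)).
  2:{ intro n. unfold A, Cc. rewrite Mbz_sh.
      replace (Cmult (Cminus (Cmult b (f' n)) (sh f' n)) (Cconj (g n))) with
        (Cminus (Cmult (Cmult b (f' n)) (Cconj (g n))) (Cmult (sh f' n) (Cconj (g n)))) by ring.
      rewrite Hlin. ring. }
  rewrite (Series_ext (fun n => p (Cmult (f' n) (Cconj (hadj w b g n))) * w n) (fun n => A n - D n)).
  2:{ intro n. unfold A, D, hadj.
      replace (Cmult (f' n) (Cconj (Cminus (Cmult (Cconj b) (g n)) (Cmult (g (S n)) (RtoC (w (S n) / w n))))))
        with (Cminus (Cmult (Cmult b (f' n)) (Cconj (g n))) (Cmult (Cmult (f' n) (Cconj (g (S n)))) (RtoC (w (S n) / w n)))).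
      2:{ apply injective_projections; simpl; ring. }
      rewrite Hlin, Hsc. pose proof (Hw n). field. lra. }
  rewrite !Series_minus by auto. rewrite (Series_incr_1 Cc) by auto. rewrite C0.
  rewrite (Series_ext (fun k => Cc (S k)) D) by reflexivity. ring.
Qed.

Lemma Im_le_Cmod x : Rabs (Im x) <= Cmod x.
Proof. rewrite <- sqrt_Rsqr_abs. unfold Cmod. apply sqrt_le_1_alt. unfold Rsqr, Im. simpl.
  pose proof (pow2_ge_0 (fst x)). nra. Qed.

Lemma adj_exists w K b g : 0 < K -> (forall n, 0 < w n) -> (forall n, w (S n) <= K * w n) ->
  in_H2 w g -> exists h, in_H2 w h /\ forall f', in_H2 w f' -> ip w (Mbz b f') g = ip w f' h.
Proof.
  intros HK Hw HwK Hg. exists (hadj w b g). split.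
  - unfold in_H2 in *.
    assert (exgS : ex_series (fun m => Cmod (g (S m))^2 * w (S m))).
    { apply (ex_series_incr_1 (fun m => Cmod (g m)^2 * w m)); auto. }
    apply ex_series_abs with (b := fun m => (2*Cmod b^2) * (Cmod (g m)^2 * w m) + (2*K) * (Cmod (g (S m))^2 * w (S m))).
    2: apply ex_series_lin; auto.
    intro m. unfold hadj. pose proof (Hw m). pose proof (Hw (S m)). pose proof (HwK m).
    rewrite Rabs_pos_eq by (apply Rmult_le_pos; [apply pow2_ge_0| lra]).
    pose proof (Cmod_sq_sub (Cmult (Cconj b) (g m)) (Cmult (g (S m)) (RtoC (w (S m) / w m)))) as E.
    rewrite !Cmod_mult, Cmod_conj, Cmod_R, Rabs_pos_eq in E.
    2: { apply Rlt_le, Rdiv_lt_0_compat; lra. }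
    set (r := w (S m) / w m) in *.
    assert (Hr : r * w m = w (S m)) by (unfold r; field; lra).
    assert (Hr2 : r <= K).
    { nra. }
    assert (Hr0 : 0 < r) by (unfold r; apply Rdiv_lt_0_compat; lra).
    set (X := Cmod (Cminus (Cmult (Cconj b) (g m)) (Cmult (g (S m)) (RtoC r)))) in *.
    set (G := Cmod (g m)) in *. set (GS := Cmod (g (S m))) in *.
    assert (E2 : X^2 * w m <= (2 * (Cmod b * G)^2 + 2 * (GS * r)^2) * w m) by (apply Rmult_le_compat_r; lra).
    assert (E3 : (GS * r)^2 * w m = GS^2 * w (S m) * r) by (rewrite <- Hr; ring).
    assert (E4 : GS^2 * w (S m) * r <= K * (GS^2 * w (S m))).
    { pose proof (pow2_ge_0 GS). assert (0 <= GS^2 * w (S m)) by nra. nra. }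
    nra.
  - intros f' Hf. unfold ip. f_equal; apply (ip_comp w K); auto;
    first [apply re_le_Cmod | apply Im_le_Cmod | intros x r; destruct x; unfold Re, Im, Cmult, RtoC; simpl; ring
          | intros x y; destruct x, y; unfold Re, Im, Cminus, Cplus, Copp; simpl; ring].
Qed.

Definition ek (k : nat) : nat -> C := fun n => if Nat.eq_dec n k then RtoC 1 else RtoC 0.

Lemma ek_H2 w k : in_H2 w (ek k).
Proof. unfold in_H2. exists (w k).
  eapply is_series_ext; [|apply (bump_series k (w k))].
  intro n. unfold ek. destruct Nat.eq_dec; simpl. subst. rewrite Cmod_1; ring. rewrite Cmod_0; ring. Qed.

Lemma ip_ek w k h : ip w (ek k) h = (fst (h k) * w k, - snd (h k) * w k).
Proof. unfold ip. f_equal; apply is_series_unique;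
  [eapply is_series_ext; [|apply (bump_series k (fst (h k) * w k))]
  |eapply is_series_ext; [|apply (bump_series k (- snd (h k) * w k))]];
  intro n; unfold ek; destruct Nat.eq_dec; subst; simpl; ring. Qed.

Lemma adj_unique w (T : (nat -> C) -> nat -> C) g h1 h2 : (forall n, 0 < w n) ->
  (forall f', in_H2 w f' -> ip w (T f') g = ip w f' h1) ->
  (forall f', in_H2 w f' -> ip w (T f') g = ip w f' h2) -> h1 = h2.
Proof. intros Hw H1 H2. apply functional_extensionality. intro k.
  pose proof (H1 _ (ek_H2 w k)). rewrite H2 in H by apply ek_H2. rewrite !ip_ek in H.
  injection H as Ha Hb. pose proof (Hw k).
  apply injective_projections.
  - apply Rmult_eq_reg_r with (w k); lra.
  - apply Rmult_eq_reg_r with (w k); lra.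
Qed.

Section Tr.
Variables (w : nat -> R) (m m' : nat -> C) (A B : (nat -> C) -> nat -> C).
Hypotheses (Hm : forall n, Cmod (m n) = 1) (Hm' : forall n, Cmod (m' n) = 1)
  (Hmm' : forall n, Cmult (m n) (m' n) = RtoC 1) (Hm'm : forall n, Cmult (m' n) (m n) = RtoC 1)
  (Hint : forall f, in_H2 w f -> mulC m (A f) = B (mulC m f)).

Lemma spec_tr l :
  (forall g, in_H2 w g -> exists! f, in_H2 w f /\ (fun n => Cminus (A f n) (Cmult l (f n))) = g) ->
  (forall g, in_H2 w g -> exists! f, in_H2 w f /\ (fun n => Cminus (B f n) (Cmult l (f n))) = g).
Proof.
  intros HA g Hg. destruct (HA (mulC m' g) (mul_H2 _ _ _ Hm' Hg)) as [f0 [[Hf0 E0] U0]].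
  exists (mulC m f0). split. split. apply mul_H2; auto.
  - rewrite <- Hint by auto. apply functional_extensionality. intro n.
    pose proof (equal_f E0 n) as E. simpl in E. unfold mulC in *.
    replace (Cminus (Cmult (m n) (A f0 n)) (Cmult l (Cmult (m n) (f0 n)))) with
      (Cmult (m n) (Cminus (A f0 n) (Cmult l (f0 n)))) by ring.
    rewrite E, Cmult_assoc, Hmm'. apply Cmult_1_l.
  - intros f' [Hf' E']. set (f1 := mulC m' f').
    assert (Ef : f' = mulC m f1) by (symmetry; apply mul_inv; auto).
    assert (Hf1 : in_H2 w f1) by (apply mul_H2; auto).
    rewrite Ef in E'. rewrite <- Hint in E' by auto.
    rewrite Ef. f_equal. apply U0. split; auto.
    apply functional_extensionality. intro n. pose proof (equal_f E' n) as E. simpl in E.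
    unfold mulC in *. rewrite <- E.
    replace (Cmult (m' n) (Cminus (Cmult (m n) (A f1 n)) (Cmult l (Cmult (m n) (f1 n))))) with
      (Cmult (Cmult (m' n) (m n)) (Cminus (A f1 n) (Cmult l (f1 n)))) by ring.
    rewrite Hm'm. symmetry. apply Cmult_1_l.
Qed.

Lemma pspec_tr l : point_spectrum w A l -> point_spectrum w B l.
Proof.
  intros [f [Hf [Hnz E]]]. exists (mulC m f). split; [apply mul_H2; auto|split].
  - intro Z. apply Hnz. rewrite <- (mul_inv m' m f Hm'm), Z. unfold mulC.
    apply functional_extensionality; intro n. apply Cmult_0_r.
  - rewrite <- Hint by auto. rewrite E. unfold mulC. apply functional_extensionality; intro n. ring.
Qed.

Lemma Hint_rev : forall g, in_H2 w g -> mulC m' (B g) = A (mulC m' g).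
Proof. intros g Hg. rewrite <- (mul_inv m m' g Hmm') at 1. rewrite <- Hint by (apply mul_H2; auto).
  apply mul_inv; auto. Qed.
End Tr.

Lemma cexpi_0 : cexpi 0 = RtoC 1.
Proof. unfold cexpi. rewrite cos_0, sin_0. reflexivity. Qed.

Lemma F1 (a : C) (theta : R) (f : nat -> C) :
  Mbz (Cmult a (cexpi theta)) (mulC (fun n => cexpi (- theta * INR n)) f) =
  (fun n => Cmult (cexpi theta) (mulC (fun n => cexpi (- theta * INR n)) (Mbz a f) n)).
Proof.
  apply functional_extensionality. intro n. unfold Mbz, mulC. destruct n.
  - ring.
  - assert (H : Cmult (cexpi theta) (cexpi (- theta * INR (S n))) = cexpi (- theta * INR n)).
    { rewrite cexpi_add, S_INR. f_equal. ring. }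
    rewrite <- H. ring.
Qed.

Theorem lemma4p1 (w : nat -> R) (a : C) :
  valid_weight w -> a <> RtoC 0 ->
  forall theta : R,
    unitarily_equivalent w (Vop w a) (Vop w (Cmult a (cexpi theta))) /\
    (forall l : C, spectrum w (Vop w a) l <-> spectrum w (Vop w (Cmult a (cexpi theta))) l) /\
    (forall l : C, point_spectrum w (Vop w a) l <->
                   point_spectrum w (Vop w (Cmult a (cexpi theta))) l).
Proof.
  intros Hv Ha theta.
  destruct (ratio_bound w Hv) as [K [HK HwK]].
  assert (Hw : forall n, 0 < w n) by apply Hv.
  set (c := cexpi theta).
  set (m := fun n => cexpi (- theta * INR n)).
  set (m' := fun n => cexpi (theta * INR n)).
  assert (Hm : forall n, Cmod (m n) = 1) by (intro; apply Cmod_cexpi).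
  assert (Hm' : forall n, Cmod (m' n) = 1) by (intro; apply Cmod_cexpi).
  assert (Hmm' : forall n, Cmult (m n) (m' n) = RtoC 1).
  { intro n. unfold m, m'. rewrite cexpi_add. rewrite <- cexpi_0. f_equal. ring. }
  assert (Hm'm : forall n, Cmult (m' n) (m n) = RtoC 1).
  { intro n. rewrite Cmult_comm. auto. }
  assert (Hc : Cmod c = 1) by apply Cmod_cexpi.
  assert (Hint : forall f, in_H2 w f -> mulC m (Vop w a f) = Vop w (Cmult a c) (mulC m f)).
  { intros f Hf. unfold Vop, adjoint. unfold m, c. rewrite F1. fold c. fold m.
    set (g := Mbz a f).
    assert (Hg : in_H2 w g) by (apply (Mbz_H2 w K); auto).
    match goal with |- mulC m (epsilon ?i ?P) = epsilon ?j ?Q =>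
      assert (exP : exists h, P h) by (apply (adj_exists w K); auto);
      pose proof (epsilon_spec i P exP) as HP;
      set (h0 := epsilon i P) in *;
      assert (HQ : Q (mulC m h0));
      [| assert (exQ : exists h, Q h) by (exists (mulC m h0); exact HQ);
         pose proof (epsilon_spec j Q exQ) as HQ2 ]
    end.
    - destruct HP as [HP0 HP]. split. apply mul_H2; auto.
      intros f' Hf'. set (f1 := mulC m' f').
      assert (Ef : f' = mulC m f1) by (symmetry; apply mul_inv; auto).
      assert (Hf1 : in_H2 w f1) by (apply mul_H2; auto).
      rewrite Ef. unfold c, m. rewrite F1. fold c. fold m.
      assert (E2 : forall u, (fun n => Cmult c (mulC m u n)) = mulC (fun n => Cmult c (m n)) u).
      { intro u. apply functional_extensionality. intro n. unfold mulC. ring. }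
      rewrite !E2. rewrite mul_ip.
      2:{ intro n. rewrite Cmod_mult, Hc, Hm. ring. }
      rewrite mul_ip by auto. apply HP; auto.
    - symmetry. destruct HQ as [_ HQ]. destruct HQ2 as [_ HQ2].
      apply (adj_unique w (Mbz (Cmult a c)) (fun n => Cmult c (mulC m g n))); auto. }
  split; [|split].
  - exists (mulC m). split; [|exact Hint].
    split; [|split; [|split]].
    + intros. apply mul_H2; auto.
    + intros f g z _ _. unfold mulC. apply functional_extensionality. intro n. ring.
    + intros. apply mul_ip; auto.
    + intros g Hg. exists (mulC m' g). split. apply mul_H2; auto. apply mul_inv; auto.
  - intro l. unfold spectrum. split; intros H1 H2; apply H1.
    + apply (spec_tr w m' m (Vop w (Cmult a c)) (Vop w a)); auto.
      intros; eapply (Hint_rev w m m' (Vop w a)); eauto.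
    + apply (spec_tr w m m' (Vop w a) (Vop w (Cmult a c))); auto.
  - intro l. split; intro H.
    + apply (pspec_tr w m m' (Vop w a) (Vop w (Cmult a c))); auto.
    + apply (pspec_tr w m' m (Vop w (Cmult a c)) (Vop w a)); auto.
      intros; eapply (Hint_rev w m m' (Vop w a)); eauto.
Qed.
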